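(* Let $a>0$, $u>0$ and $v\in\mathbb{R}$. The inequality $a\cosh x\le\cosh(ux+v)$ holds for all real $x$ if and only if $a\in(0,1]$, $u\ge1$ and $|v|\le v_0(a,u)$, where: if $u>1$, $$v_0=u\log\left(\frac{A}{a}+\frac{uB}{a}\right)-\log(A+B),\qquad A=\sqrt{\frac{u^2-a^2}{u^2-1}},\ B=\sqrt{\frac{1-a^2}{u^2-1}},$$ and if $u=1$, $v_0=-\log a$. *)

(* Defs.v *)
From Stdlib Require Import Reals.
Open Scope R_scope.

Definition vA (a u : R) : R := sqrt ((u ^ 2 - a ^ 2) / (u ^ 2 - 1)).
Definition vB (a u : R) : R := sqrt ((1 - a ^ 2) / (u ^ 2 - 1)).

Definition v0 (a u : R) : R :=
  if Req_EM_T u 1 then - ln a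
  else u * ln (vA a u / a + u * vB a u / a) - ln (vA a u + vB a u).

(* Main.v *)
Require Import Defs.
From Stdlib Require Import Reals Lra Psatz.
Open Scope R_scope.
Open Scope R_scope.

Lemma cosh_mono_lt y z : 0 <= y < z -> cosh y < cosh z.
Proof.
  intros [H1 H2]. unfold cosh. rewrite !exp_Ropp.
  assert (Ey : 1 <= exp y). { rewrite <- exp_0. destruct H1 as [H1|H1]. left; apply exp_increasing; auto. subst; lra. }
  assert (Ez : exp y < exp z) by (apply exp_increasing; auto).
  set (P := exp y) in *. set (Q := exp z) in *.
  assert (HP : P * /P = 1) by (field; lra).
  assert (HQ : Q * /Q = 1) by (field; lra).
  assert (0 < /P) by (apply Rinv_0_lt_compat; lra).
  assert (0 < /Q) by (apply Rinv_0_lt_compat; lra).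
  assert (E1 : /P - /Q = (Q - P) * /P * /Q) by (field; lra).
  assert (E2 : /P <= 1) by (rewrite <- Rinv_1; apply Rinv_le_contravar; lra).
  assert (E3 : /Q < 1) by (rewrite <- Rinv_1; apply Rinv_lt_contravar; lra).
  assert (E4 : /P * /Q < 1) by nra.
  nra.
Qed.

Lemma cosh_opp x : cosh (- x) = cosh x.
Proof. unfold cosh. rewrite Ropp_involutive. lra. Qed.

Lemma sinh_opp x : sinh (- x) = - sinh x.
Proof. unfold sinh. rewrite Ropp_involutive. lra. Qed.

Lemma cosh_Rabs x : cosh (Rabs x) = cosh x.
Proof. unfold Rabs; destruct (Rcase_abs x); auto using cosh_opp. Qed.

Lemma cosh_lt_abs y z : Rabs y < Rabs z -> cosh y < cosh z.
Proof. intros H. rewrite <- (cosh_Rabs y), <- (cosh_Rabs z).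
  apply cosh_mono_lt. split; auto. apply Rabs_pos. Qed.

Lemma cosh_le_abs y z : Rabs y <= Rabs z -> cosh y <= cosh z.
Proof. intros [H|H]. left; apply cosh_lt_abs; auto.
  rewrite <- (cosh_Rabs y), <- (cosh_Rabs z), H; lra. Qed.

Lemma cosh_ge1 x : 1 <= cosh x.
Proof. rewrite <- cosh_0. apply cosh_le_abs. rewrite Rabs_R0. apply Rabs_pos. Qed.

Lemma cosh_le_abs_inv y z : cosh y <= cosh z -> Rabs y <= Rabs z.
Proof. intros H. destruct (Rle_lt_dec (Rabs y) (Rabs z)); auto.
  apply cosh_lt_abs in r. lra. Qed.

Lemma mono_deriv f f' s : 0 <= s -> (forall c, 0 <= c <= s -> derivable_pt_lim f c (f' c)) ->
  (forall c, 0 < c < s -> 0 <= f' c) -> f 0 <= f s.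
Proof.
  intros [Hs|Hs] Hd Hp.
  - destruct (MVT_cor2 f f' 0 s Hs Hd) as [c [E Hc]].
    assert (0 <= f' c) by (apply Hp; auto). nra.
  - subst; lra.
Qed.

Lemma dlin u x : derivable_pt_lim (fun t => u * t) x u.
Proof.
  assert (H := derivable_pt_lim_scal id u x 1 (derivable_pt_lim_id x)).
  rewrite Rmult_1_r in H. exact H.
Qed.

Lemma d_sinh_lin u x : derivable_pt_lim (fun t => sinh (u * t)) x (cosh (u * x) * u).
Proof.
  apply (derivable_pt_lim_comp (fun t => u * t) sinh). apply dlin. apply derivable_pt_lim_sinh.
Qed.

Lemma d_exp_lin u x : derivable_pt_lim (fun t => exp (u * t)) x (exp (u * x) * u).
Proof.
  apply (derivable_pt_lim_comp (fun t => u * t) exp). apply dlin. apply derivable_pt_lim_exp.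
Qed.

Lemma L2 u d : 1 <= u -> 0 <= d -> u * sinh d <= sinh (u * d).
Proof.
  intros Hu Hd.
  assert (H := mono_deriv (fun t => sinh (u * t) - u * sinh t)
     (fun t => cosh (u * t) * u - u * cosh t) d Hd).
  simpl in H. rewrite Rmult_0_r, sinh_0 in H.
  cut (0 - u * 0 <= sinh (u * d) - u * sinh d). lra.
  apply H.
  - intros c _. apply (derivable_pt_lim_minus (fun t => sinh (u*t)) (mult_real_fct u sinh)).
    apply d_sinh_lin. apply derivable_pt_lim_scal. apply derivable_pt_lim_sinh.
  - intros c Hc. assert (cosh c <= cosh (u * c)).
    { apply cosh_le_abs. rewrite Rabs_mult. rewrite (Rabs_right u) by lra.
      assert (0 <= Rabs c) by apply Rabs_pos. nra. }
    nra.
Qed.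

Lemma L3 u s : 1 <= u -> 0 <= s -> 0 <= exp (- (u * s)) - cosh s + u * sinh s.
Proof.
  intros Hu Hs.
  assert (H := mono_deriv (fun t => exp ((- u) * t) - cosh t + u * sinh t)
     (fun t => exp ((- u) * t) * (- u) - sinh t + u * cosh t) s Hs).
  simpl in H. rewrite Rmult_0_r, sinh_0, cosh_0, exp_0 in H.
  replace (- (u * s)) with (- u * s) by ring. assert (1 - 1 + u * 0 = 0) by ring. rewrite <- H0 at 1. apply H.
  - intros c _. apply (derivable_pt_lim_plus (fun t => exp (- u * t) - cosh t) (mult_real_fct u sinh)).
    apply (derivable_pt_lim_minus (fun t => exp (- u * t)) cosh).
    apply d_exp_lin. apply derivable_pt_lim_cosh.
    apply derivable_pt_lim_scal. apply derivable_pt_lim_sinh.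
  - intros c Hc.
    assert (E1 : exp (- u * c) <= exp (- c)). { destruct (Req_dec u 1). subst; rewrite Ropp_mult_distr_l_reverse, Rmult_1_l; lra. left; apply exp_increasing; nra. }
    assert (E2 : exp (- c) = cosh c - sinh c) by (unfold cosh, sinh; lra).
    assert (E3 : exp (- u * c) <= 1). { rewrite <- exp_0. destruct (Req_dec c 0). lra. left; apply exp_increasing; nra. }
    assert (E4 := cosh_ge1 c). nra.
Qed.

Lemma sinh_cosh_exp x : cosh x - sinh x = exp (- x).
Proof. unfold cosh, sinh; lra. Qed.

Lemma keyK A B u d : 0 <= B -> B <= A -> 1 <= u ->
  A * cosh d + u * B * sinh d <= A * cosh (u * d) + B * sinh (u * d).
Proof.
  intros HB HAB Hu.
  assert (Hc : cosh d <= cosh (u * d)).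
  { apply cosh_le_abs. rewrite Rabs_mult. rewrite (Rabs_right u) by lra.
    assert (0 <= Rabs d) by apply Rabs_pos. nra. }
  destruct (Rle_lt_dec 0 d) as [Hd|Hd].
  - assert (H2 := L2 u d Hu Hd). nra.
  - set (s := - d). assert (Hs : 0 <= s) by (unfold s; lra).
    replace d with (- s) in * by (unfold s; ring).
    replace (u * - s) with (- (u * s)) in * by ring.
    rewrite !cosh_opp, !sinh_opp in *.
    assert (H3 := L3 u s Hu Hs).
    rewrite <- sinh_cosh_exp in H3. nra.
Qed.

Lemma Rdiv_le_0_compat x y : 0 <= x -> 0 < y -> 0 <= x / y.
Proof. intros. unfold Rdiv. apply Rmult_le_pos; auto. left; apply Rinv_0_lt_compat; auto. Qed.

Lemma main_ineq a u X : 0 < a -> a <= 1 -> 1 < u ->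
  a * cosh X <= cosh (u * X - v0 a u).
Proof.
  intros ha ha1 hu.
  assert (hd : 0 < u ^ 2 - 1) by nra.
  assert (hA2 : vA a u * vA a u = (u ^ 2 - a ^ 2) / (u ^ 2 - 1)).
  { unfold vA. apply sqrt_sqrt. apply Rdiv_le_0_compat; nra. }
  assert (hB2 : vB a u * vB a u = (1 - a ^ 2) / (u ^ 2 - 1)).
  { unfold vB. apply sqrt_sqrt. apply Rdiv_le_0_compat; nra. }
  assert (hA0 : 0 <= vA a u) by apply sqrt_pos.
  assert (hB0 : 0 <= vB a u) by apply sqrt_pos.
  unfold v0. destruct (Req_EM_T u 1) as [e|_]; [lra|].
  set (A := vA a u) in *. set (B := vB a u) in *.
  assert (h1 : A * A - B * B = 1) by (rewrite hA2, hB2; field; lra).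
  assert (h2 : A * A - u * u * (B * B) = a * a) by (rewrite hA2, hB2; field; lra).
  assert (hA1 : 1 <= A) by nra.
  assert (hAB : B < A) by nra.
  set (p := A / a + u * B / a).
  assert (hp : 0 < p). { unfold p. apply Rplus_lt_le_0_compat. apply Rdiv_lt_0_compat; lra.
     apply Rdiv_le_0_compat; nra. }
  assert (hpi : / p = (A - u * B) / a).
  { unfold p. field_simplify_eq. 2: split; [lra|]. nra.
    intro h. assert (A + u * B = 0) by (field_simplify in h; auto; nra). nra. }
  assert (hs : / (A + B) = A - B).
  { field_simplify_eq; nra. }
  set (xs := ln p). set (d := X - xs).
  assert (Hl : a * cosh X = A * cosh d + u * B * sinh d).
  { replace X with (xs + d) by (unfold d; ring). unfold cosh, sinh.
    rewrite Ropp_plus_distr, !exp_plus, exp_Ropp. unfold xs. rewrite exp_ln by lra.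
    rewrite hpi. unfold p. field. lra. }
  assert (Hr : u * X - (u * xs - ln (A + B)) = u * d + ln (A + B)) by (unfold d, xs; ring).

  rewrite Hl, Hr.
  assert (Hc : cosh (u * d + ln (A + B)) = A * cosh (u * d) + B * sinh (u * d)).
  { unfold cosh, sinh. rewrite Ropp_plus_distr, !exp_plus, (exp_Ropp (ln (A + B))).
    rewrite exp_ln by lra. rewrite hs. field. }
  rewrite Hc. apply keyK; lra.
Qed.

Lemma suff_gt a u v : 0 < a -> a <= 1 -> 1 < u -> Rabs v <= v0 a u ->
  forall x, a * cosh x <= cosh (u * x + v).
Proof.
  intros ha ha1 hu hv x.
  set (w := v0 a u) in *.
  assert (hw : 0 <= w) by (assert (0 <= Rabs v) by apply Rabs_pos; lra).
  assert (H0 := main_ineq a u (w / u) ha ha1 hu). fold w in H0.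
  replace (u * (w / u) - w) with 0 in H0 by (field; lra). rewrite cosh_0 in H0.
  rewrite <- (cosh_Rabs x). set (X := Rabs x).
  assert (hX : 0 <= X) by apply Rabs_pos.
  assert (hux : Rabs (u * x + v) >= u * X - Rabs v).
  { unfold X. rewrite <- (Rabs_right u) at 2 by lra. rewrite <- Rabs_mult.
    assert (h := Rabs_triang (u * x + v) (- v)). rewrite Rabs_Ropp in h.
    replace (u * x + v + - v) with (u * x) in h by ring. lra. }
  destruct (Rle_lt_dec w (u * X)) as [c|c].
  - apply Rle_trans with (cosh (u * X - w)). apply main_ineq; lra.
    apply cosh_le_abs. rewrite (Rabs_right (u * X - w)) by lra. lra.
  - assert (cosh X <= cosh (w / u)).
    { apply cosh_le_abs. rewrite (Rabs_right X) by lra.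
      rewrite Rabs_right. apply Rmult_le_reg_l with u. lra.
      replace (u * (w / u)) with w by (field; lra). lra.
      apply Rle_ge, Rdiv_le_0_compat; lra. }
    assert (h1 := cosh_ge1 (u * x + v)). nra.
Qed.

Lemma exp_le x y : x <= y -> exp x <= exp y.
Proof. intros [h|h]. left; apply exp_increasing; auto. subst; lra. Qed.

Lemma ln_le x y : 0 < x -> x <= y -> ln x <= ln y.
Proof. intros hx [h|h]. left; apply ln_increasing; auto. subst; lra. Qed.

Lemma exp_ln_le a z : 0 < a -> a <= exp z -> ln a <= z.
Proof. intros ha h. rewrite <- (ln_exp z). apply ln_le; auto. Qed.

Lemma suff_1 a v : 0 < a -> Rabs v <= - ln a -> forall x, a * cosh x <= cosh (1 * x + v).
Proof.
  intros ha hv x. rewrite Rmult_1_l.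
  assert (h1 : a <= exp v).
  { rewrite <- (exp_ln a) by auto. apply exp_le.
    assert (h := Rle_abs (- v)). rewrite Rabs_Ropp in h. lra. }
  assert (h2 : a <= exp (- v)).
  { rewrite <- (exp_ln a) by auto. apply exp_le.
    assert (h := Rle_abs v). lra. }
  unfold cosh. rewrite Ropp_plus_distr, !exp_plus.
  assert (0 < exp x) by apply exp_pos. assert (0 < exp (- x)) by apply exp_pos.
  nra.
Qed.

Lemma nec_a a u v : 0 < a -> 0 < u -> (forall x, a * cosh x <= cosh (u * x + v)) -> a <= 1.
Proof.
  intros ha hu H. assert (h := H (- v / u)).
  replace (u * (- v / u) + v) with 0 in h by (field; lra). rewrite cosh_0 in h.
  assert (h2 := cosh_ge1 (- v / u)). nra.
Qed.

Lemma cosh_le_exp y : cosh y <= exp (Rabs y).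
Proof. rewrite <- cosh_Rabs. unfold cosh. assert (h := Rabs_pos y).
  assert (exp (- Rabs y) <= 1) by (rewrite <- exp_0; apply exp_le; lra).
  assert (1 <= exp (Rabs y)) by (rewrite <- exp_0; apply exp_le; lra). lra. Qed.

Lemma nec_u a u v : 0 < a -> a <= 1 -> 0 < u -> (forall x, a * cosh x <= cosh (u * x + v)) -> 1 <= u.
Proof.
  intros ha ha1 hu H. destruct (Rle_lt_dec 1 u) as [h|h]; auto. exfalso.
  assert (hl : ln (a / 2) < 0). { rewrite <- ln_1. apply ln_increasing.
    apply Rdiv_lt_0_compat; lra. lra. }
  set (x := (Rabs v - ln (a / 2) + 1) / (1 - u)).
  assert (hx1 : (1 - u) * x = Rabs v - ln (a / 2) + 1) by (unfold x; field; lra).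
  assert (hv := Rabs_pos v).
  assert (hx : 0 < x) by (unfold x; apply Rdiv_lt_0_compat; lra).
  assert (h1 := H x).
  assert (h2 := cosh_le_exp (u * x + v)).
  assert (h3 : Rabs (u * x + v) <= u * x + Rabs v).
  { apply Rle_trans with (Rabs (u * x) + Rabs v). apply Rabs_triang.
    rewrite Rabs_right by nra. lra. }
  assert (h4 : a * cosh x >= exp (ln (a / 2) + x)).
  { rewrite exp_plus, exp_ln by (apply Rdiv_lt_0_compat; lra). unfold cosh.
    assert (0 < exp (- x)) by apply exp_pos. nra. }
  assert (h5 : exp (ln (a / 2) + x) <= exp (u * x + Rabs v)).
  { assert (h6 := exp_le _ _ h3). lra. }
  destruct (Rle_lt_dec (ln (a / 2) + x) (u * x + Rabs v)) as [h7|h7].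
  - nra.
  - assert (h8 := exp_increasing _ _ h7). lra.
Qed.

Lemma nec_1_half a v : 0 < a -> (forall x, a * cosh x <= cosh (1 * x + v)) -> a <= exp v.
Proof.
  intros ha H. destruct (Rle_lt_dec a (exp v)) as [h|h]; auto. exfalso.
  set (K := Rabs (exp (- v) - a) / (a - exp v) + 1).
  assert (hK0 : 0 <= Rabs (exp (- v) - a) / (a - exp v)) by (apply Rdiv_le_0_compat; [apply Rabs_pos|lra]).
  assert (hK : K * (a - exp v) = Rabs (exp (- v) - a) + (a - exp v)) by (unfold K; field; lra).
  assert (hKp : 0 < K) by (unfold K; lra).
  set (x := ln K / 2).
  assert (ht : exp x * exp x = K). { rewrite <- exp_plus. replace (x + x) with (ln K) by (unfold x; field). apply exp_ln; auto. }
  assert (h1 := H x). rewrite Rmult_1_l in h1. unfold cosh in h1.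
  rewrite Ropp_plus_distr, exp_plus, exp_plus in h1. rewrite exp_Ropp in h1.
  set (t := exp x) in *. assert (htp : 0 < t) by apply exp_pos.
  assert (hti : t * / t = 1) by (field; lra).
  assert (h2 : a * (t * t + 1) <= exp v * (t * t) + exp (- v)).
  { assert (h3 : t * (a * ((t + / t) / 2)) <= t * ((t * exp v + / t * exp (- v)) / 2)) by (apply Rmult_le_compat_l; lra).
    assert (E1 : t * (a * ((t + / t) / 2)) = a * (t * t + 1) / 2) by (field; lra).
    assert (E2 : t * ((t * exp v + / t * exp (- v)) / 2) = (exp v * (t * t) + exp (- v)) / 2) by (field; lra).
    lra. }
  rewrite ht in h2. assert (h4 := Rle_abs (exp (- v) - a)). nra.
Qed.

Lemma cond_neg a u v : (forall x, a * cosh x <= cosh (u * x + v)) -> (forall x, a * cosh x <= cosh (u * x + - v)).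
Proof. intros H x. assert (h := H (- x)). rewrite cosh_opp in h.
  replace (u * - x + v) with (- (u * x + - v)) in h by ring. rewrite cosh_opp in h. auto. Qed.

Lemma nec_1 a v : 0 < a -> (forall x, a * cosh x <= cosh (1 * x + v)) -> Rabs v <= - ln a.
Proof.
  intros ha H. assert (h1 := nec_1_half a v ha H).
  assert (h2 := nec_1_half a (- v) ha (cond_neg a 1 v H)).
  apply exp_ln_le in h1; auto. apply exp_ln_le in h2; auto.
  unfold Rabs; destruct (Rcase_abs v); lra.
Qed.

Lemma setup a u : 0 < a -> a <= 1 -> 1 < u ->
  exists xs cs A, v0 a u = u * xs - cs /\ a * cosh xs = A /\ cosh cs = A /\
    0 <= xs /\ 0 <= cs /\ 1 <= A.
Proof.
  intros ha ha1 hu.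
  assert (hd : 0 < u ^ 2 - 1) by nra.
  assert (hA2 : vA a u * vA a u = (u ^ 2 - a ^ 2) / (u ^ 2 - 1)).
  { unfold vA. apply sqrt_sqrt. apply Rdiv_le_0_compat; nra. }
  assert (hB2 : vB a u * vB a u = (1 - a ^ 2) / (u ^ 2 - 1)).
  { unfold vB. apply sqrt_sqrt. apply Rdiv_le_0_compat; nra. }
  assert (hA0 : 0 <= vA a u) by apply sqrt_pos.
  assert (hB0 : 0 <= vB a u) by apply sqrt_pos.
  unfold v0. destruct (Req_EM_T u 1) as [e|_]; [lra|].
  set (A := vA a u) in *. set (B := vB a u) in *.
  assert (h1 : A * A - B * B = 1) by (rewrite hA2, hB2; field; lra).
  assert (h2 : A * A - u * u * (B * B) = a * a) by (rewrite hA2, hB2; field; lra).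
  assert (hA1 : 1 <= A) by nra.
  assert (hAB : B < A) by nra.
  set (p := A / a + u * B / a).
  assert (hp1 : 1 <= p). { unfold p.
     assert (A / a >= 1). { apply Rle_ge. apply Rmult_le_reg_l with a; auto.
        replace (a * (A / a)) with A by (field; lra). lra. }
     assert (0 <= u * B / a) by (apply Rdiv_le_0_compat; nra). lra. }
  assert (hp : 0 < p) by lra.
  assert (hpi : / p = (A - u * B) / a).
  { unfold p. field_simplify_eq. 2: split; [lra|]. nra.
    intro h. assert (A + u * B = 0) by (field_simplify in h; auto; nra). nra. }
  assert (hs : / (A + B) = A - B).
  { field_simplify_eq; nra. }
  exists (ln p), (ln (A + B)), A. split; [ring|]. split; [|split; [|split; [|split]]].
  - unfold cosh. rewrite exp_Ropp, exp_ln by lra. rewrite hpi. unfold p. field. lra.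
  - unfold cosh. rewrite exp_Ropp, exp_ln by lra. rewrite hs. field.
  - rewrite <- ln_1. apply ln_le; lra.
  - rewrite <- ln_1. apply ln_le; lra.
  - lra.
Qed.

Lemma nec_gt_half a u v : 0 < a -> a <= 1 -> 1 < u ->
  (forall x, a * cosh x <= cosh (u * x + v)) -> - v <= v0 a u.
Proof.
  intros ha ha1 hu H.
  destruct (setup a u ha ha1 hu) as [xs [cs [A [e [h1 [h2 [h3 [h4 h5]]]]]]]].
  rewrite e.
  assert (k1 := H xs). rewrite h1, <- h2 in k1.
  apply cosh_le_abs_inv in k1. rewrite (Rabs_right cs) in k1 by lra.
  destruct (Rle_lt_dec 0 (u * xs + v)) as [c|c].
  - rewrite Rabs_right in k1 by lra. lra.
  - rewrite Rabs_left in k1 by lra.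
    assert (k2 := H (- v / u)).
    replace (u * (- v / u) + v) with 0 in k2 by (field; lra). rewrite cosh_0 in k2.
    assert (k3 : cosh (- v / u) <= cosh xs) by nra.
    apply cosh_le_abs_inv in k3. rewrite (Rabs_right xs) in k3 by lra.
    assert (k4 : - v / u <= xs) by (assert (h := Rle_abs (- v / u)); lra).
    assert (k5 : - v <= u * xs).
    { replace (- v) with (u * (- v / u)) by (field; lra). apply Rmult_le_compat_l; lra. }
    lra.
Qed.

Theorem lemma5 (a u v : R) (ha : 0 < a) (hu : 0 < u) :
  (forall x : R, a * cosh x <= cosh (u * x + v)) <->
  (a <= 1 /\ 1 <= u /\ Rabs v <= v0 a u).
Proof.
  split.
  - intros H. assert (ha1 := nec_a a u v ha hu H).
    assert (hu1 := nec_u a u v ha ha1 hu H).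
    split; auto. split; auto.
    destruct (Req_dec u 1) as [e|ne].
    + subst u. unfold v0. destruct (Req_EM_T 1 1) as [_|n]; [|lra].
      apply nec_1; auto.
    + assert (hu2 : 1 < u) by lra.
      assert (k1 := nec_gt_half a u v ha ha1 hu2 H).
      assert (k2 := nec_gt_half a u (- v) ha ha1 hu2 (cond_neg a u v H)).
      unfold Rabs; destruct (Rcase_abs v); lra.
  - intros [ha1 [hu1 hv]].
    destruct (Req_dec u 1) as [e|ne].
    + subst u. unfold v0 in hv. destruct (Req_EM_T 1 1) as [_|n]; [|lra].
      apply suff_1; auto.
    + apply suff_gt; auto. lra.
Qed.
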